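(* Let $x_1,\dots,x_n\in\mathbb{R}^2$ satisfy $x_i\prec x_j$ whenever $i<j$, and let $p\ge 2$. For $k\in\{2,\dots,p\}$ and $i\in\{k,\dots,n\}$, let $C^{MSN}_{k,i}$ be the optimal value of the Max-Sum-Neighbor $k$-dispersion problem among the points $x_1,\dots,x_i$, i.e. $C^{MSN}_{k,i}=\max_{1\le i_1<\dots<i_k\le i}\sum_{j=1}^{k-1}d_{i_j,i_{j+1}}$. Then $C^{MSN}_{2,i}=d_{1,i}$ for all $i\in\{2,\dots,n\}$, and for all $k\in\{3,\dots,p\}$ and $i\in\{k,\dots,n\}$, $$C^{MSN}_{k,i}=\max_{j\in\{k-1,\dots,i-1\}}\left(C^{MSN}_{k-1,j}+d_{j,i}\right).$$
   Context: For $y=(y^1,y^2),z=(z^1,z^2)\in\mathbb{R}^2$ write $y\prec z$ iff $y^1<z^1$ and $y^2>z^2$. Fix $\alpha>0$, let $d$ be the Euclidean distance, and set $d_{ij}=d(x_i,x_j)^\alpha$. *)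

(* Defs.v *)
(* R : realType, Euclidean distance via Num.sqrt,
   real exponent via powR (with 0 `^ a = 0 for a <> 0). *)
From HB Require Import structures.
From mathcomp Require Import all_boot all_order all_algebra.
From mathcomp Require Import all_classical all_reals all_analysis.
Set Implicit Arguments. Unset Strict Implicit. Unset Printing Implicit Defensive.
Import Order.TTheory GRing.Theory Num.Theory.
Local Open Scope ring_scope.

Definition prec (R : realType) (y z : R * R) : Prop := y.1 < z.1 /\ y.2 > z.2.

Definition edist (R : realType) (y z : R * R) : R :=
  Num.sqrt ((y.1 - z.1) ^+ 2 + (y.2 - z.2) ^+ 2).

(* d_{ij} = d(x_i, x_j)^alpha ; points indexed by nat (only 1..n used) *)
Definition dd (R : realType) (alpha : R) (x : nat -> R * R) (i j : nat) : R :=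
  powR (edist (x i) (x j)) alpha.

Definition msn_feasible (k i : nat) (t : k.-tuple 'I_i.+1) : bool :=
  sorted ltn (map val t) && all (fun j : 'I_i.+1 => 0 < val j)%N t.

Definition msn_obj (R : realType) (alpha : R) (x : nat -> R * R) (k i : nat)
  (t : k.-tuple 'I_i.+1) : R :=
  \sum_(j < k.-1) dd alpha x (nth 0%N (map val t) j) (nth 0%N (map val t) j.+1).

(* C^{MSN}_{k,i}: maximum of the objective over feasible choices.
   All objective values are >= 0, so seeding the max with 0 is harmless
   whenever the feasible set is nonempty (k <= i). *)
Definition C_MSN (R : realType) (alpha : R) (x : nat -> R * R) (k i : nat) : R :=
  \big[Num.max/0]_(t : k.-tuple 'I_i.+1 | msn_feasible t) msn_obj alpha x t.

(* Main.v *)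
Require Import Defs.
From HB Require Import structures.
From mathcomp Require Import all_boot all_order all_algebra.
From mathcomp Require Import all_classical all_reals all_analysis.
From mathcomp Require Import zify ring lra.
Set Implicit Arguments. Unset Strict Implicit. Unset Printing Implicit Defensive.
Import Order.TTheory GRing.Theory Num.Theory.
Local Open Scope ring_scope.

Definition validS (k i : nat) (s : seq nat) : bool :=
  [&& size s == k, sorted ltn s & all (fun a => (0 < a <= i)%N) s].

Definition objs (R : realType) (alpha : R) (x : nat -> R * R) (s : seq nat) : R :=
  \sum_(j < (size s).-1) dd alpha x (nth 0%N s j) (nth 0%N s j.+1).

Lemma dd_ge0 (R : realType) (alpha : R) x a b : 0 <= dd alpha x a b.
Proof. exact: powR_ge0. Qed.

Lemma objs_ge0 (R : realType) (alpha : R) x s : 0 <= objs alpha x s.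
Proof. by apply: sumr_ge0 => j _; exact: dd_ge0. Qed.

Lemma obj_eq (R : realType) (alpha : R) x k i (t : k.-tuple 'I_i.+1) :
  msn_obj alpha x t = objs alpha x (map val t).
Proof. by rewrite /objs size_map size_tuple. Qed.

Lemma valid_of k i (t : k.-tuple 'I_i.+1) : msn_feasible t -> validS k i (map val t).
Proof.
case/andP=> so al; rewrite /validS size_map size_tuple eqxx so /=.
rewrite all_map; apply/allP => a ain /=; rewrite (allP al a ain) /=.
by rewrite -ltnS ltn_ord.
Qed.

Lemma tup_of k i s : validS k i s ->
  exists t : k.-tuple 'I_i.+1, msn_feasible t /\ map val t = s.
Proof.
case/and3P=> /eqP hs so al.
have hs' : size (map (@inord i) s) == k by rewrite size_map hs.
have mv : map val (map (@inord i) s) = s.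
  rewrite -map_comp map_id_in // => a ain /=.
  by rewrite inordK // ltnS; case/andP: (allP al a ain).
exists (Tuple hs'); split => //.
by rewrite /msn_feasible /= mv so /= all_map; apply/allP => a ain /=;
  rewrite inordK; [case/andP: (allP al a ain)| rewrite ltnS; case/andP: (allP al a ain)].
Qed.

Lemma C_ub (R : realType) (alpha : R) x k i V : 0 <= V ->
  (forall s, validS k i s -> objs alpha x s <= V) -> C_MSN alpha x k i <= V.
Proof.
move=> V0 H; apply: bigmax_le => // t ft.
by rewrite obj_eq; apply: H; exact: valid_of.
Qed.

Lemma C_lb (R : realType) (alpha : R) x k i s : validS k i s ->
  objs alpha x s <= C_MSN alpha x k i.
Proof.
case/tup_of=> t [ft mv]; rewrite -mv -obj_eq.
by apply: le_bigmax_cond.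
Qed.

Lemma C_ge0 (R : realType) (alpha : R) x k i : 0 <= C_MSN alpha x k i.
Proof. exact: bigmax_ge_id. Qed.

Lemma C_arg (R : realType) (alpha : R) x k i : (k <= i)%N ->
  exists s, validS k i s /\ C_MSN alpha x k i = objs alpha x s.
Proof.
move=> ki.
have vi : validS k i (iota 1 k).
  rewrite /validS size_iota eqxx iota_ltn_sorted /=.
  by apply/allP => a; rewrite mem_iota => /andP[h1 h2]; apply/andP; split; lia.
case: (tup_of vi) => t0 [ft0 _].
rewrite /C_MSN.
case: (@eq_bigmax _ _ _ 0 t0 (fun t => msn_feasible t) (fun t => msn_obj alpha x t) ft0).
  by move=> t _; apply: sumr_ge0 => j _; exact: dd_ge0.
move=> t1 ft1 ->.
by exists (map val t1); split; [exact: valid_of | rewrite obj_eq].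
Qed.

Lemma objs_rcons (R : realType) (alpha : R) x s a : s != [::] ->
  objs alpha x (rcons s a) = objs alpha x s + dd alpha x (last 0%N s) a.
Proof.
case: s => [//|y s0] _.
rewrite /objs size_rcons /= big_ord_recr /=.
congr (_ + _).
  apply: eq_bigr => j _; have := ltn_ord j => hj.
  by rewrite -!rcons_cons !nth_rcons /= ifT ?ifT //; lia.
rewrite -rcons_cons nth_rcons /= ifT //.
have -> : nth 0%N (y :: s0) (size s0) = last y s0.
  by rewrite (nth_last 0%N (y :: s0)).
  by rewrite nth_rcons ltnn eqxx.
Qed.

Lemma path_le_last y s0 : path ltn y s0 -> all (fun b => b <= last y s0)%N (y :: s0).
Proof.
elim: s0 y => [|z s1 IH] y /=; first by rewrite leqnn.
case/andP=> yz p; have := IH z p => /= /andP[zl al].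
by rewrite zl al andbT; lia.
Qed.

Lemma path_size_last y s0 : path ltn y s0 -> (y + size s0 <= last y s0)%N.
Proof.
elim: s0 y => [|z s1 IH] y /=; first by rewrite addn0.
case/andP=> yz p; have := IH z p; lia.
Qed.

Lemma dd_mono (R : realType) (alpha : R) (n : nat) (x : nat -> R * R)
  (halpha : 0 < alpha)
  (hx : forall i j : nat, (1 <= i)%N -> (i < j)%N -> (j <= n)%N -> prec (x i) (x j))
  a b a' b' : (1 <= a')%N -> (a' <= a)%N -> (a <= b)%N -> (b <= b')%N -> (b' <= n)%N ->
  dd alpha x a b <= dd alpha x a' b'.
Proof.
have c1 : forall u v, (1 <= u)%N -> (u <= v)%N -> (v <= n)%N ->
    (x u).1 <= (x v).1 /\ (x v).2 <= (x u).2.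
  move=> u v h1; rewrite leq_eqVlt => /orP[/eqP-> _|uv h3]; first by split.
  by case: (hx u v h1 uv h3) => p q; split; apply: ltW.
move=> h1 h2 h3 h4 h5.
have [p1 q1] := c1 a' a h1 h2 ltac:(lia).
have [p2 q2] := c1 a b ltac:(lia) h3 ltac:(lia).
have [p3 q3] := c1 b b' ltac:(lia) h4 h5.
rewrite /dd; apply: ge0_ler_powR; first exact: ltW.
- by rewrite nnegrE sqrtr_ge0.
- by rewrite nnegrE sqrtr_ge0.
rewrite /edist; apply: ler_wsqrtr; apply: lerD; nra.
Qed.

Theorem proposition8 (R : realType) (alpha : R) (n p : nat) (x : nat -> R * R)
  (halpha : 0 < alpha) (hp : (2 <= p)%N)
  (hx : forall i j : nat, (1 <= i)%N -> (i < j)%N -> (j <= n)%N -> prec (x i) (x j)) :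
  (forall i : nat, (2 <= i <= n)%N -> C_MSN alpha x 2 i = dd alpha x 1 i) /\
  (forall k i : nat, (3 <= k <= p)%N -> (k <= i <= n)%N ->
     C_MSN alpha x k i =
     \big[Num.max/0]_(k.-1 <= j < i) (C_MSN alpha x k.-1 j + dd alpha x j i)).
Proof.
have mono := dd_mono halpha hx.
split.
  move=> i /andP[i2 iN]; apply/eqP; rewrite eq_le; apply/andP; split.
    apply: C_ub; first exact: dd_ge0.
    case=> [|a [|b [|c s]]] //= /and3P[/eqP sz so al] //.
    rewrite /objs /= big_ord1 /=.
    move: so al => /= /andP[ab _] /and3P[/andP[a0 ai] /andP[b0 bi] _].
    apply: mono; lia.
  have v : validS 2 i [:: 1%N; i].
    have i1 : (1 < i)%N by lia.
    by rewrite /validS /= i1 (ltnW i1) leqnn.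
  by have := C_lb alpha x v; rewrite /objs /= big_ord1.
move=> k i /andP[k3 kp] /andP[ki iN].
apply/eqP; rewrite eq_le; apply/andP; split.
  apply: C_ub; first exact: bigmax_ge_id.
  move=> s; case/lastP: s => [|s' a]; first by case/and3P=> /eqP sz _ _; rewrite /= in sz; lia.
  case: s' => [|y s0]; first by case/and3P=> /eqP sz _ _; rewrite size_rcons /= in sz; lia.
  rewrite /validS size_rcons /= rcons_path all_rcons.
  case/and3P => /eqP sz /andP[pa la] /andP[/andP[a0 ai] /andP[/andP[y0 yi] al]].
  rewrite -rcons_cons objs_rcons //=.
  have hl := path_le_last pa. have hs := path_size_last pa.
  set j := last y s0 in la hl hs *.
  have jr : (k.-1 <= j < i)%N by apply/andP; split; lia.
  apply: (@le_trans _ _ (C_MSN alpha x k.-1 j + dd alpha x j i)).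
    apply: lerD; last by apply: mono; lia.
    apply: C_lb; rewrite /validS; apply/and3P; split; [apply/eqP => /=; lia | exact: pa |].
    apply/allP => b bin; have /= bj := allP hl b bin.
    move: bin; rewrite inE => /orP[/eqP->|bs]; first by apply/andP; split; lia.
    by have /andP[b0 _] := allP al b bs; apply/andP; split; lia.
  apply: (@le_bigmax_seq _ _ _ _ _ j xpredT (fun j => C_MSN alpha x k.-1 j + dd alpha x j i)) => //.
  by rewrite mem_index_iota.
rewrite big_seq_cond; apply: bigmax_le; first exact: C_ge0.
move=> j /andP[]; rewrite mem_index_iota => /andP[j1 ji] _.
have [s' [vs' ->]] := C_arg alpha x (k := k.-1) (i := j) j1.
case: s' vs' => [|y s0]; first by case/and3P=> /eqP sz _ _; rewrite /= in sz; lia.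
case/and3P => /eqP sz pa al.
have hl := path_le_last pa.
have /andP[y0 yj] : (0 < y <= j)%N by move: al => /= /andP[].
have lj : (last y s0 <= j)%N by case/andP: (allP al (last y s0) (mem_last y s0)).
have v : validS k i (rcons (y :: s0) i).
  rewrite /validS size_rcons sz prednK; last by lia.
  rewrite eqxx /= rcons_path; apply/and3P; split.
  - by apply/andP; split; [exact: pa | exact: leq_ltn_trans lj ji].
  - by apply/andP; split; lia.
  rewrite all_rcons; apply/andP; split; first by apply/andP; split; lia.
  apply/allP => b bs; have /andP[b0 bj] := allP al b (mem_behead (s := y :: s0) bs).
  by apply/andP; split; lia.
apply: le_trans (C_lb alpha x v).
rewrite objs_rcons //=; apply: lerD => //.
have yl : (y <= last y s0)%N by case/andP: hl.
apply: mono; lia.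
Qed.
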